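(* Let $G$ be a finite simple undirected graph and $r<s$ positive integers; run set-k on $(G,r,s)$, with processing order $R_1,R_2,\dots$. At any time $t$, for every $K_r$ $R$ that is unprocessed at time $t$, the current value $\delta(R)$ is at least the $\mathcal{S}_t$-degree of $R$. Moreover, if $t=t_k$ for some $k$, then $\delta(R)$ equals the $\mathcal{S}_t$-degree of $R$ for every such unprocessed $R$.
   Context: A $K_r$ is an $r$-clique of $G$. Procedure set-k$(G,r,s)$: enumerate all $K_r$s and $K_s$s of $G$; for every $K_r$ $R$ initialize $\delta(R)$ to the number of $K_s$s containing $R$; mark every $K_r$ unprocessed. Then repeat until all $K_r$s are processed: pick an unprocessed $K_r$ $R$ with minimum current $\delta(R)$ (ties broken arbitrarily); set $\kappa(R)=\delta(R)$; for each $K_s$ $S$ containing $R$: if some $K_r$ contained in $S$ is already marked processed, skip $S$; otherwise, for each $K_r$ $R'\subset S$ with $R'\neq R$, if $\delta(R')>\delta(R)$ then decrease $\delta(R')$ by $1$. Finally mark $R$ processed. $R_i$ denotes the $i$-th processed $K_r$; ''at time $t$'' means at the beginning of the iteration in which $R_t$ is processed. The sequence $\kappa(R_i)$ is non-decreasing; the transition time $t_k$ is the unique index with $\kappa(R_{t_k})=k$ and ($t_k=1$ or $\kappa(R_{t_k-1})<k$); it is defined only when some $K_r$ receives $\kappa$-value $k$. A $K_s$ $S$ is unprocessed at time $t$ if all $K_r$s contained in $S$ are unprocessed at time $t$; $\mathcal{S}_t$ is the set of such $K_s$s. For a set $\mathcal{S}$ of $K_s$s, the $\mathcal{S}$-degree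 of a $K_r$ $R$ is the number of $S\in\mathcal{S}$ containing $R$. *)

(* Defs.v *)
From mathcomp Require Import all_boot.

Section SetK.
Variables (T : finType) (e : rel T) (r s : nat).

Definition is_clique (A : {set T}) : bool :=
  [forall x in A, forall y in A, (x != y) ==> e x y].

Definition is_Kr (A : {set T}) : bool := is_clique A && (#|A| == r).
Definition is_Ks (A : {set T}) : bool := is_clique A && (#|A| == s).

Definition delta0 (R : {set T}) : nat :=
  #|[set S : {set T} | is_Ks S & R \subset S]|.

Definition Ks_unprocessed (P : {set {set T}}) (S : {set T}) : bool :=
  [forall R' : {set T}, (is_Kr R' && (R' \subset S)) ==> (R' \notin P)].

(* body of the inner loop for one K_s S containing R (P = processed K_r's) *)
Definition update_S (P : {set {set T}}) (R S : {set T})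
    (d : {set T} -> nat) : {set T} -> nat :=
  if ~~ Ks_unprocessed P S then d
  else fun R' => if [&& is_Kr R', R' \subset S, R' != R & d R < d R']
                 then (d R').-1 else d R'.

Definition step (P : {set {set T}}) (d : {set T} -> nat) (R : {set T})
    : {set T} -> nat :=
  foldr (update_S P R) d [seq S <- enum {set T} | is_Ks S & R \subset S].

Definition state (pre : seq {set T}) : {set {set T}} * ({set T} -> nat) :=
  foldl (fun acc R => (R |: acc.1, step acc.1 acc.2 R)) (set0, delta0) pre.

(* 0-based: index i corresponds to time t = i+1, i.e. R_{i+1} = nth set0 ord i *)
Definition delta_at (ord : seq {set T}) (i : nat) : {set T} -> nat :=
  (state (take i ord)).2.

Definition processed_at (ord : seq {set T}) (i : nat) : {set {set T}} :=
  [set R in take i ord].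

(* ord is a possible processing order of a complete run of set-k(G,r,s) *)
Definition valid_run (ord : seq {set T}) : Prop :=
  (forall i, i < size ord ->
     is_Kr (nth set0 ord i) /\ nth set0 ord i \notin take i ord /\
     (forall R', is_Kr R' -> R' \notin take i ord ->
        delta_at ord i (nth set0 ord i) <= delta_at ord i R'))
  /\ (forall R, is_Kr R -> R \in ord).

Definition kappa (ord : seq {set T}) (i : nat) : nat :=
  delta_at ord i (nth set0 ord i).

Definition S_deg (ord : seq {set T}) (i : nat) (R : {set T}) : nat :=
  #|[set S : {set T} | is_Ks S &
       (R \subset S) && Ks_unprocessed (processed_at ord i) S]|.

End SetK.

(* Main.v *)
Require Import Defs.
From mathcomp Require Import all_boot.
From mathcomp Require Import zify.

Lemma card_count (T : finType) (p : pred T) : #|[set x | p x]| = count p (enum T).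
Proof. by rewrite cardsE cardE enumT /enum_mem -size_filter. Qed.

Lemma count_split {A : eqType} (a b : pred A) (l : seq A) :
  count a l = count (fun x => a x && b x) l + count (fun x => a x && ~~ b x) l.
Proof. elim: l => //= x l ->; case: (a x); case: (b x) => /=; lia. Qed.

Section Proofs.
Variables (T : finType) (e : rel T) (r s : nat).
Local Notation Kr := (is_Kr T e r).
Local Notation Ks := (is_Ks T e s).
Local Notation unproc := (Ks_unprocessed T e r).

Lemma fold_step P X (d : {set T} -> nat) (L : seq {set T}) R' :
  R' != X -> d X <= d R' ->
  foldr (update_S T e r P X) d L R' =
    maxn (d X) (d R' - count (fun S => unproc P S && Kr R' && (R' \subset S)) L)
  /\ foldr (update_S T e r P X) d L X = d X.
Proof.
move=> nRX le; elim: L => [|S L [IH1 IH2]] /=; first by split => //; lia.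
move: IH1 IH2; set g := foldr _ d L => IH1 IH2.
rewrite /update_S; case: (unproc P S) => /=; last by split.
split; last by rewrite eqxx /= !andbF.
rewrite nRX IH2; move: IH1; case: (Kr R'); case: (R' \subset S) => /= IH1;
  rewrite IH1 //=; try lia; case: ltnP => H; lia.
Qed.

Lemma state_rcons pre x :
  state T e r s (rcons pre x) =
  (x |: (state T e r s pre).1,
   step T e r s (state T e r s pre).1 (state T e r s pre).2 x).
Proof. by rewrite /state foldl_rcons. Qed.

Lemma state1 pre : (state T e r s pre).1 = [set x in pre].
Proof.
elim/last_ind: pre => [|pre x IH]; first by apply/setP => y; rewrite !inE.
rewrite state_rcons /= IH; apply/setP => y.
by rewrite !inE mem_rcons in_cons.
Qed.

Lemma unproc_add P X S : Kr X ->
  unproc (X |: P) S = unproc P S && ~~ (X \subset S).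
Proof.
move=> KX; apply/forallP/andP.
- move=> H; split.
  + apply/forallP => R''; apply/implyP => HR; move: (H R'') => /implyP /(_ HR).
    by rewrite in_setU1 negb_or => /andP [].
  + apply/negP => XS; move: (H X) => /implyP; rewrite KX XS in_setU1 eqxx.
    by move=> /(_ isT).
- move=> [/forallP H1 nXS] R''; apply/implyP => /andP [KR RS].
  rewrite in_setU1 negb_or; move: (H1 R''); rewrite KR RS /= => ->.
  rewrite andbT; apply/negP => /eqP E; subst R''; by rewrite RS in nXS.
Qed.

Definition cval (ord : seq {set T}) (t : nat) :=
  if t is t'.+1 then kappa T e r s ord t' else 0.

Lemma inv ord : valid_run T e r s ord ->
  forall t, t <= size ord -> forall R, Kr R -> R \notin take t ord ->
  delta_at T e r s ord t R = maxn (S_deg T e r s ord t R) (cval ord t).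
Proof.
move=> [V _]; elim=> [|t IH] Ht R KR nR.
- rewrite /delta_at /S_deg /= take0 /= /delta0 maxn0.
  apply: eq_card => S; rewrite !inE.
  have -> : unproc (processed_at T ord 0) S.
    apply/forallP => R'; apply/implyP => _; by rewrite /processed_at take0 inE.
  by rewrite andbT.
have Ht' : t < size ord by [].
move: (V t Ht') => [KX [nX minX]].
set X := nth set0 ord t in KX nX minX.
have Htake : take t.+1 ord = rcons (take t ord) X by rewrite (take_nth set0).
move: nR; rewrite Htake mem_rcons in_cons negb_or => /andP [nRX nR].
have IHR := IH (ltnW Ht') R KR nR.
have IHX := IH (ltnW Ht') X KX nX.
have leXR := minX R KR nR.
rewrite /delta_at Htake state_rcons /= /step.
rewrite -/(delta_at T e r s ord t).
have [-> _] := fold_step (state T e r s (take t ord)).1 X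
   (delta_at T e r s ord t)
   [seq S <- enum {set T} | is_Ks T e s S & X \subset S] R nRX leXR.
rewrite count_filter.
set m := count _ _.
have HD : S_deg T e r s ord t R = S_deg T e r s ord t.+1 R + m.
  rewrite /S_deg /m /processed_at !card_count state1 Htake.
  rewrite (count_split _ (fun S : {set T} => X \subset S)) addnC; congr (_ + _).
  - apply: eq_count => S /=.
    have -> : [set R0 in rcons (take t ord) X] = X |: [set R0 in take t ord].
      by apply/setP => y; rewrite !inE mem_rcons in_cons.
    by rewrite unproc_add // !andbA.
  - apply: eq_count => S; rewrite /predI /= KR andbT.
    case: (Ks S); case: (X \subset S); case: (R \subset S);
    by rewrite /= ?andbT ?andbF.
rewrite /kappa -/X; lia.
Qed.

End Proofs.

Theorem claim2 (T : finType) (e : rel T) (r s : nat) :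
  symmetric e -> irreflexive e -> 0 < r -> r < s ->
  forall ord : seq {set T}, valid_run T e r s ord ->
  forall i, i < size ord ->
  forall R : {set T}, is_Kr T e r R -> R \notin take i ord ->
    S_deg T e r s ord i R <= delta_at T e r s ord i R /\
    ((exists k, kappa T e r s ord i = k /\
                (i = 0 \/ kappa T e r s ord i.-1 < k)) ->
     delta_at T e r s ord i R = S_deg T e r s ord i R).
Proof.
move=> _ _ _ _ ord Vr i Hi R KR nR.
have H := @inv T e r s ord Vr i (ltnW Hi) R KR nR.
have [V _] := Vr.
have [_ [_ minX]] := V i Hi.
have le := minX R KR nR.
split; first by rewrite H; lia.
move=> [k [<- Hk]]; move: H le Hk; rewrite /cval /kappa.
case: i {Hi nR minX} => [|i] H le [Hk|Hk] //=; rewrite ?succnK in Hk; lia.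
Qed.
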